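(* Let $X$ take values in a countable set $\mathcal{X}$, $T\in\{0,1\}$, and $Y$ take values in a countable set $\mathcal{Y}\subseteq\mathbb{R}$, with joint distribution $P$, and let $Q(T\mid X)$ be a model with $Q(T=t\mid X=x)>0$ for all $t,x$. Fix $t\in\{0,1\}$ with $P(T=t)>0$ and $y\in\mathcal{Y}$ with $Z_{y,t}:=\sum_{x}P(Y=y\mid X=x,T=t)P(X=x)\in(0,\infty)$. For a model $M\in\{P,Q\}$ define $$\pi_{y,t}(M)=\sum_{x\in\mathcal{X}}P(Y=y\mid X=x,T=t)\,\frac{P(X=x\mid T=t)}{M(T=t\mid X=x)}.$$ Let $R_{y,t}$ be the distribution on $\mathcal{X}$ with $R_{y,t}(x)=P(Y=y\mid X=x,T=t)P(X=x)/Z_{y,t}$, let $\ell_t(x)=\left(1-\frac{P(T=t\mid X=x)}{Q(T=t\mid X=x)}\right)^2$, and let $k'_{y,t}=Z_{y,t}/P(T=t)$. Then $$|\pi_{y,t}(P)-\pi_{y,t}(Q)|\le k'_{y,t}\,\mathbb{E}_{X\sim R_{y,t}}\big[\ell_t(X)^{1/2}\big].$$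
   Context: Here $P(Y=y\mid X=x,T=t)$, $P(X=x\mid T=t)$, $P(T=t\mid X=x)$ denote conditional probabilities under the data distribution $P$, and $Q(T=t\mid X=x)$ is a propensity score model used in an inverse probability of treatment weighting estimator. *)

(* Defs.v *)
From HB Require Import structures.
From mathcomp Require Import all_boot all_order all_algebra.
From mathcomp Require Import all_classical all_reals.
From mathcomp Require Import ereal esum.
Set Implicit Arguments. Unset Strict Implicit. Unset Printing Implicit Defensive.
Import Order.TTheory GRing.Theory Num.Theory.
Local Open Scope ring_scope.
Local Open Scope classical_set_scope.

Section Defs.
Variables (R : realType) (X Y : countType).

(* joint pmf of (X, T, Y): p x t y = P(X = x, T = t, Y = y);
   T in {0,1} is encoded by bool (false = 0, true = 1). *)
Definition is_joint_pmf (p : X -> bool -> Y -> R) : Prop :=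
  (forall x t y, 0 <= p x t y) /\
  (\esum_(z in [set: X * bool * Y]) (p z.1.1 z.1.2 z.2)%:E = 1%E).

(* Marginals (finite since p is summable with total mass 1). *)
Definition PXT (p : X -> bool -> Y -> R) (x : X) (t : bool) : R :=
  fine (\esum_(y in [set: Y]) (p x t y)%:E).
Definition PX (p : X -> bool -> Y -> R) (x : X) : R :=
  fine (\esum_(z in [set: bool * Y]) (p x z.1 z.2)%:E).
Definition PT (p : X -> bool -> Y -> R) (t : bool) : R :=
  fine (\esum_(x in [set: X]) (PXT p x t)%:E).

(* Conditionals (MathComp convention r / 0 = 0). *)
Definition PYgXT (p : X -> bool -> Y -> R) (y : Y) (x : X) (t : bool) : R :=
  p x t y / PXT p x t.
Definition PXgT (p : X -> bool -> Y -> R) (x : X) (t : bool) : R :=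
  PXT p x t / PT p t.
Definition PTgX (p : X -> bool -> Y -> R) (t : bool) (x : X) : R :=
  PXT p x t / PX p x.

Definition Zyt (p : X -> bool -> Y -> R) (y : Y) (t : bool) : \bar R :=
  \esum_(x in [set: X]) (PYgXT p y x t * PX p x)%:E.

(* pi_{y,t}(M), with M x t = M(T=t | X=x) *)
Definition pi_yt (p : X -> bool -> Y -> R) (M : X -> bool -> R)
    (y : Y) (t : bool) : \bar R :=
  \esum_(x in [set: X]) (PYgXT p y x t * PXgT p x t / M x t)%:E.

Definition Pmodel (p : X -> bool -> Y -> R) : X -> bool -> R :=
  fun x t => PTgX p t x.

Definition Ryt (p : X -> bool -> Y -> R) (y : Y) (t : bool) (x : X) : R :=
  PYgXT p y x t * PX p x / fine (Zyt p y t).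

Definition ell (p : X -> bool -> Y -> R) (Q : X -> bool -> R) (t : bool)
    (x : X) : R :=
  (1 - PTgX p t x / Q x t) ^+ 2.

End Defs.

(* Main.v *)
Require Import Defs.
From HB Require Import structures.
From mathcomp Require Import all_boot all_order all_algebra.
From mathcomp Require Import all_classical all_reals.
From mathcomp Require Import ereal esum.
From mathcomp Require Import lra ring.
Import Order.TTheory GRing.Theory Num.Theory.
Set Implicit Arguments. Unset Strict Implicit.
Local Open Scope ring_scope.
Local Open Scope classical_set_scope.

Section H.
Variable R : realType.

Lemma esumZ_le (T : choiceType) (A : set T) (k : R) (f : T -> \bar R) :
  0 <= k -> (forall x, A x -> 0 <= f x)%E ->
  (\esum_(i in A) (k%:E * f i) <= k%:E * \esum_(i in A) f i)%E.
Proof.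
move=> k0 f0; apply: ge_ereal_sup => _ [F [finF FA] <-].
rewrite fsbig_finite//= big_seq -ge0_sume_distrr; last first.
  move=> i; rewrite in_fset_set// inE => /FA; exact: f0.
rewrite -big_seq -fsbig_finite//; apply: lee_wpmul2l; first by rewrite lee_fin.
by apply: ereal_sup_ubound; exists F.
Qed.

Lemma esum_sub (T : choiceType) (A B : set T) (f : T -> \bar R) :
  A `<=` B -> (\esum_(i in A) f i <= \esum_(i in B) f i)%E.
Proof.
move=> AB; apply: ge_ereal_sup => _ [F [finF FA] <-]; apply: esum_ge.
by exists F => //; split => // z /FA /AB.
Qed.

Lemma esum_tri (T : choiceType) (a b : T -> R) :
  (forall x, 0 <= a x) -> (forall x, 0 <= b x) ->
  (\esum_(i in [set: T]) (a i)%:E < +oo)%E ->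
  (`| \esum_(i in [set: T]) (a i)%:E - \esum_(i in [set: T]) (b i)%:E |
    <= \esum_(i in [set: T]) (`|a i - b i|)%:E)%E.
Proof.
move=> a0 b0 afin.
have H1 : (\esum_(i in [set: T]) (b i)%:E <= \esum_(i in [set: T]) (a i)%:E
   + \esum_(i in [set: T]) (`|a i - b i|)%:E)%E.
  rewrite -esumD//; last by move=> *; rewrite lee_fin.
  apply: le_esum => i _; rewrite -EFinD lee_fin.
  by rewrite -lerBlDl; apply: (le_trans (ler_norm _)); rewrite distrC.
have H2 : (\esum_(i in [set: T]) (a i)%:E <= \esum_(i in [set: T]) (b i)%:E
   + \esum_(i in [set: T]) (`|a i - b i|)%:E)%E.
  rewrite -esumD//; last by move=> *; rewrite lee_fin.
  apply: le_esum => i _; rewrite -EFinD lee_fin.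
  by rewrite -lerBlDl; apply: (le_trans (ler_norm _)).
have A0 : (0 <= \esum_(i in [set: T]) (a i)%:E)%E by apply: esum_ge0 => *; rewrite lee_fin.
have B0 : (0 <= \esum_(i in [set: T]) (b i)%:E)%E by apply: esum_ge0 => *; rewrite lee_fin.
have C0 : (0 <= \esum_(i in [set: T]) (`|a i - b i|)%:E)%E by apply: esum_ge0 => *; rewrite lee_fin.
move: H1 H2 A0 B0 C0 afin.
case: (\esum_(i in [set: T]) (a i)%:E) => [A| |] //;
case: (\esum_(i in [set: T]) (b i)%:E) => [B| |] //;
case: (\esum_(i in [set: T]) (`|a i - b i|)%:E) => [C| |] //=.
- move=> H1 H2 _ _ _ _; move: H1 H2; rewrite -!EFinD !lee_fin => H1 H2.
  by rewrite ler_norml; apply/andP; split; lra.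
- by move=> *; rewrite leey.
Qed.
Variables (X Y : countType) (p : X -> bool -> Y -> R).

Lemma EX_le1 x : is_joint_pmf p ->
  (\esum_(z in [set: bool * Y]) (p x z.1 z.2)%:E <= 1)%E.
Proof.
move=> [_ <-].
rewrite -(esum_image setT (fun z : bool * Y => (x, z.1, z.2))
   (fun j => (p j.1.1 j.1.2 j.2)%:E)); last first.
  by move=> [a b] [c d] _ _ [-> ->].
exact: esum_sub.
Qed.

Lemma EXT_le x t :
  (\esum_(y in [set: Y]) (p x t y)%:E <=
   \esum_(z in [set: bool * Y]) (p x z.1 z.2)%:E)%E.
Proof.
rewrite -(esum_image setT (fun y : Y => (t, y))
   (fun j => (p x j.1 j.2)%:E)); last first.
  by move=> a b _ _ [->].
exact: esum_sub.
Qed.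
Lemma ptwise (u pxt px pt q z : R) : 0 <= u -> 0 <= pxt -> pxt <= px ->
  0 < pt -> 0 < q -> 0 < z -> (pxt = 0 -> u = 0) ->
  u * (pxt / pt) / (pxt / px) = u * px / pt /\
  `|u * (pxt / pt) / (pxt / px) - u * (pxt / pt) / q| =
   (z / pt) * (u * px / z * Num.sqrt ((1 - pxt / px / q) ^+ 2)).
Proof.
move=> u0 pxt0 pxtpx pt0 q0 z0 hu.
have [e|pxtn0] := eqVneq pxt 0.
  by rewrite (hu e) e !mul0r subrr normr0 mulr0.
have px0 : 0 < px by apply: lt_le_trans pxtpx; rewrite lt_def pxtn0.
have e1 : u * (pxt / pt) / (pxt / px) = u * px / pt.
  by field; rewrite pxtn0 !gt_eqF.
split => //; rewrite e1 sqrtr_sqr.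
have -> : u * px / pt - u * (pxt / pt) / q = (u * px / pt) * (1 - pxt / px / q).
  by field; rewrite !gt_eqF.
rewrite normrM ger0_norm; last exact: divr_ge0 (mulr_ge0 u0 (ltW px0)) (ltW pt0).
by rewrite mulrA; congr (_ * _); field; rewrite !gt_eqF.
Qed.
End H.

Theorem mainTheorem2 (R : realType) (X Y : countType)
  (p : X -> bool -> Y -> R) (Q : X -> bool -> R) (t : bool) (y : Y) :
  is_joint_pmf p ->
  (forall x s, 0 < Q x s) ->
  (forall x, Q x false + Q x true = 1) ->
  0 < PT p t ->
  (0 < Zyt p y t)%E -> (Zyt p y t < +oo)%E ->
  (`| pi_yt p (Pmodel p) y t - pi_yt p Q y t |
     <= (fine (Zyt p y t) / PT p t)%:E *
        \esum_(x in [set: X]) (Ryt p y t x * Num.sqrt (ell p Q t x))%:E)%E.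
Proof.
move=> pmf Q0 _ PT0 Z0 Zoo.
have p0 := pmf.1.
have z0 : 0 < fine (Zyt p y t) by apply: fine_gt0; rewrite Z0 Zoo.
have EXT0 x : (0 <= \esum_(y in [set: Y]) (p x t y)%:E)%E.
  by apply: esum_ge0 => *; rewrite lee_fin.
have EXfin x : \esum_(z in [set: bool * Y]) (p x z.1 z.2)%:E \is a fin_num.
  rewrite ge0_fin_numE; last by apply: (le_trans (EXT0 x)); apply: EXT_le.
  by apply: (le_lt_trans (EX_le1 x pmf)); rewrite ltry.
have EXTfin x : \esum_(y in [set: Y]) (p x t y)%:E \is a fin_num.
  rewrite ge0_fin_numE //; apply: (le_lt_trans (EXT_le p x t)).
  by rewrite -ge0_fin_numE ?EXfin //; apply: (le_trans (EXT0 x)); apply: EXT_le.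
have PXT0 x : 0 <= PXT p x t by apply: fine_ge0.
have PXTle x : PXT p x t <= PX p x by apply: fine_le => //; apply: EXT_le.
have u0 x : 0 <= PYgXT p y x t by apply: divr_ge0.
have hu x : PXT p x t = 0 -> PYgXT p y x t = 0.
  by rewrite /PYgXT => ->; rewrite invr0 mulr0.
have key x := ptwise (u0 x) (PXT0 x) (PXTle x) PT0 (Q0 x t) z0 (hu x).
have a0 x : 0 <= PYgXT p y x t * PXgT p x t / Pmodel p x t.
  rewrite /PXgT /Pmodel /PTgX (key x).1.
  exact: divr_ge0 (mulr_ge0 (u0 x) (le_trans (PXT0 x) (PXTle x))) (ltW PT0).
have b0 x : 0 <= PYgXT p y x t * PXgT p x t / Q x t.
  exact: divr_ge0 (mulr_ge0 (u0 x) (divr_ge0 (PXT0 x) (ltW PT0))) (ltW (Q0 x t)).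
apply: le_trans; first apply: (esum_tri a0 b0).
  under eq_esum => x _ do rewrite /PXgT /Pmodel /PTgX (key x).1 mulrC EFinM.
  apply: (le_lt_trans (esumZ_le _ _)).
  - by rewrite invr_ge0 ltW.
  - by move=> x _; rewrite lee_fin mulr_ge0 // (le_trans (PXT0 x)).
  rewrite -/(Zyt p y t) -(fineK (_ : Zyt p y t \is a fin_num)); last first.
    by rewrite ge0_fin_numE ?Zoo // ltW.
  by rewrite -EFinM ltry.
under eq_esum => x _ do rewrite /PXgT /Pmodel (key x).2 EFinM.
apply: esumZ_le; first by rewrite divr_ge0 ?ltW.
move=> x _; rewrite lee_fin mulr_ge0 ?sqrtr_ge0 //.
  exact: divr_ge0 (mulr_ge0 (u0 x) (le_trans (PXT0 x) (PXTle x))) (ltW z0).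
Qed.
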